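(* Every non-strictly slope-disjoint straight-line drawing of a rooted tree is monotone and planar.
   Context: All tree edges are directed away from the root; $T_u$ is the subtree rooted at $u$. The slope of a directed edge $(u,v)$ is the angle (mod $2\pi$) of the counter-clockwise rotation taking the horizontal half-line from $u$ towards increasing $x$ onto the half-line from $u$ through $v$. A drawing is non-strictly slope-disjoint if to every vertex $u$ one can assign angles $0\le a_1(u)<a_2(u)\le\pi$ such that: (1) every edge $e$ of $T_u$ and the edge entering $u$ from its parent satisfies $a_1(u)<slope(e)<a_2(u)$; (2) for every vertex $u$ and child $v$: $a_1(u)\le a_1(v)<a_2(v)\le a_2(u)$; (3) for two distinct children $v_1,v_2$ of the same vertex: either $a_1(v_1)<a_2(v_1)\le a_1(v_2)<a_2(v_2)$ or $a_1(v_2)<a_2(v_2)\le a_1(v_1)<a_2(v_1)$. A path $p_0,\dots,p_k$ in a straight-line drawing is monotone if there is a line $\ell$ such that the orthogonal projections of $p_0,\dots,p_k$ onto $\ell$ appear along $\ell$ in this order. A straight-line drawing of a graph is monotone if every pair of vertices is connected by a monotone path; it is planar if no two edges cross. *)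

(* Defs.v *)
From Stdlib Require Import Reals Lra List.
Import ListNotations.
Open Scope R_scope.

(* A rooted tree with n vertices is encoded by vertices 0..n-1, root 0, and a
   parent function par with par v < v for 0 < v < n.  Its (directed) edges are
   (par v, v) for 0 < v < n, directed away from the root. *)
Definition rooted_tree (n : nat) (par : nat -> nat) : Prop :=
  forall v, (0 < v < n)%nat -> (par v < v)%nat.

Inductive is_desc (n : nat) (par : nat -> nat) (u : nat) : nat -> Prop :=
| desc_refl : is_desc n par u u
| desc_step : forall w x, is_desc n par u w -> (0 < x < n)%nat -> par x = w ->
    is_desc n par u x.

Definition point := (R * R)%type.

Definition drawing (n : nat) (pos : nat -> point) : Prop :=
  forall u v, (u < n)%nat -> (v < n)%nat -> pos u = pos v -> u = v.

Definition slope_is (A B : point) (theta : R) : Prop :=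
  0 <= theta < 2 * PI /\
  exists r, 0 < r /\ fst B - fst A = r * cos theta /\ snd B - snd A = r * sin theta.

Definition slope_in (A B : point) (lo hi : R) : Prop :=
  exists theta, slope_is A B theta /\ lo < theta < hi.

Definition non_strictly_slope_disjoint (n : nat) (par : nat -> nat)
    (pos : nat -> point) : Prop :=
  exists a1 a2 : nat -> R,
    (forall u, (u < n)%nat -> 0 <= a1 u < a2 u /\ a2 u <= PI) /\
    (forall u w, (u < n)%nat -> (w < n)%nat -> is_desc n par u w -> w <> u ->
        slope_in (pos (par w)) (pos w) (a1 u) (a2 u)) /\
    (forall u, (0 < u < n)%nat -> slope_in (pos (par u)) (pos u) (a1 u) (a2 u)) /\
    (forall v, (0 < v < n)%nat -> a1 (par v) <= a1 v /\ a1 v < a2 v /\ a2 v <= a2 (par v)) /\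
    (forall v1 v2, (0 < v1 < n)%nat -> (0 < v2 < n)%nat -> v1 <> v2 -> par v1 = par v2 ->
        (a1 v1 < a2 v1 <= a1 v2 /\ a1 v2 < a2 v2) \/
        (a1 v2 < a2 v2 <= a1 v1 /\ a1 v1 < a2 v1)).

Definition adjacent (n : nat) (par : nat -> nat) (u v : nat) : Prop :=
  ((0 < v < n)%nat /\ par v = u) \/ ((0 < u < n)%nat /\ par u = v).

Definition tree_path (n : nat) (par : nat -> nat) (p : list nat) (u v : nat) : Prop :=
  p <> [] /\ nth 0 p 0%nat = u /\ last p 0%nat = v /\
  (forall i, (S i < length p)%nat -> adjacent n par (nth i p 0%nat) (nth (S i) p 0%nat)).

Definition proj (d P : point) : R := fst d * fst P + snd d * snd P.

Definition monotone_path (pos : nat -> point) (p : list nat) : Prop :=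
  exists d : point, d <> (0, 0) /\
    forall i, (S i < length p)%nat ->
      proj d (pos (nth i p 0%nat)) < proj d (pos (nth (S i) p 0%nat)).

Definition monotone_drawing (n : nat) (par : nat -> nat) (pos : nat -> point) : Prop :=
  forall u v, (u < n)%nat -> (v < n)%nat ->
    exists p, tree_path n par p u v /\ monotone_path pos p.

Definition on_segment (A B P : point) : Prop :=
  exists t, 0 <= t <= 1 /\
    fst P = fst A + t * (fst B - fst A) /\ snd P = snd A + t * (snd B - snd A).

Definition planar_drawing (n : nat) (par : nat -> nat) (pos : nat -> point) : Prop :=
  forall v w, (0 < v < n)%nat -> (0 < w < n)%nat -> v <> w ->
    forall P, on_segment (pos (par v)) (pos v) P -> on_segment (pos (par w)) (pos w) P ->
      exists x, (x = par v \/ x = v) /\ (x = par w \/ x = w) /\ P = pos x.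

(* Main.v *)
Require Import Defs.
From Stdlib Require Import Reals List Lra Lia.
Import ListNotations.
Open Scope R_scope.

Inductive chain (R : nat -> nat -> Prop) : list nat -> Prop :=
| ch_nil : chain R []
| ch_one x : chain R [x]
| ch_cons x y l : R x y -> chain R (y :: l) -> chain R (x :: y :: l).

Lemma chain_nth R p : chain R p -> forall i, (S i < length p)%nat ->
  R (nth i p 0%nat) (nth (S i) p 0%nat).
Proof.
  induction 1; intros i Hi; simpl in Hi.
  - lia.
  - lia.
  - destruct i; simpl; auto. apply (IHchain i). simpl. lia.
Qed.

Lemma chain_snoc R l x y : chain R (l ++ [x]) -> R x y -> chain R (l ++ [x; y]).
Proof.
  induction l as [|a l IH]; simpl; intros H Hxy.
  - constructor; [exact Hxy| constructor].
  - destruct l as [|b l]; simpl in *.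
    + inversion H; subst. constructor; auto.
    + inversion H; subst. constructor; auto.
Qed.

Lemma chain_rev R l : chain R l -> chain (fun a b => R b a) (rev l).
Proof.
  induction 1.
  - constructor.
  - constructor.
  - simpl in *. rewrite <- app_assoc. simpl. apply chain_snoc; auto.
Qed.

Lemma chain_app R l1 x l2 : chain R (l1 ++ [x]) -> chain R (x :: l2) -> chain R (l1 ++ x :: l2).
Proof.
  induction l1 as [|a l1 IH]; simpl; intros H1 H2; auto.
  destruct l1 as [|b l1]; simpl in *.
  - inversion H1; subst. constructor; auto.
  - inversion H1; subst. constructor; auto.
Qed.

Lemma chain_impl_in (R S : nat -> nat -> Prop) l :
  (forall a b, In a l -> In b l -> R a b -> S a b) -> chain R l -> chain S l.
Proof.
  intros HH C. revert HH. induction C; intros Hi; constructor.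
  - apply Hi; simpl; auto.
  - apply IHC. intros a b Ha Hb. apply Hi; simpl in *; auto.
Qed.

Lemma chain_last (R : nat -> nat -> Prop) x l : (forall a b c, R a b -> R b c -> R a c) ->
  chain R (x :: l) -> l <> [] -> R x (last l 0%nat).
Proof.
  intros T. revert x. induction l as [|y l IH]; intros x C Hn; [congruence|].
  inversion C; subst. destruct l as [|z l].
  - simpl. assumption.
  - assert (R y (last (z::l) 0%nat)) by (apply IH; [assumption| discriminate]).
    change (last (y :: z :: l) 0%nat) with (last (z::l) 0%nat). eauto.
Qed.

Definition Up (n : nat) (par : nat -> nat) (a b : nat) : Prop := (0 < a < n)%nat /\ par a = b.

Lemma chain_Up_lt n par x l : rooted_tree n par -> chain (Up n par) (x :: l) ->
  forall a, In a l -> (a < x)%nat.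
Proof.
  intros RT. revert x. induction l as [|y l IH]; intros x C a Ha; [destruct Ha|].
  inversion C; subst. destruct H1 as [H1 H1'].
  assert (par x < x)%nat by (apply RT; lia).
  destruct Ha as [->|Ha]; [lia|]. specialize (IH y H3 a Ha). lia.
Qed.

Lemma chain_Up_last_le n par x l : rooted_tree n par -> chain (Up n par) (x :: l) ->
  forall a, In a (x :: l) -> (last (x :: l) 0%nat <= a)%nat.
Proof.
  intros RT. revert x. induction l as [|y l IH]; intros x C a Ha.
  - destruct Ha as [->|[]]. simpl. lia.
  - inversion C; subst. destruct H1 as [H1 H1'].
    assert (par x < x)%nat by (apply RT; lia). subst y.
    change (last (x :: par x :: l) 0%nat) with (last (par x :: l) 0%nat).
    destruct Ha as [<-|Ha].
    + specialize (IH (par x) H3 (par x) (or_introl eq_refl)). lia.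
    + apply IH; auto.
Qed.

Lemma desc_le n par u w : is_desc n par u w -> (u <= w)%nat \/ True.
Proof. auto. Qed.
Definition uplist n par (L : list nat) (x c : nat) : Prop :=
  (exists T, L = x :: T) /\ last L 0%nat = c /\ chain (Up n par) L.
Definition side n par (L : list nat) (c c1 : nat) : Prop :=
  L = [c] \/ ((0 < c1 < n)%nat /\ par c1 = c /\ In c1 L /\
               forall a, In a L -> a = c \/ is_desc n par c1 a).
Definition Inv n par u v : Prop := exists c L1 L2 c1 c2,
  uplist n par L1 u c /\ uplist n par L2 v c /\ side n par L1 c c1 /\ side n par L2 c c2 /\
  (L1 = [c] \/ L2 = [c] \/ c1 <> c2).

Lemma inv_refl n par u : Inv n par u u.
Proof.
  exists u, [u], [u], 0%nat, 0%nat.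
  unfold uplist, side. repeat split; try (exists []; reflexivity); try apply ch_one; left; reflexivity.
Qed.

Lemma inv_sym n par u v : Inv n par u v -> Inv n par v u.
Proof.
  intros (c & L1 & L2 & c1 & c2 & U1 & U2 & S1 & S2 & D).
  exists c, L2, L1, c2, c1. split; [auto|]. split; [auto|]. split; [auto|]. split; [auto|].
  destruct D as [D|[D|D]]; auto.
Qed.

Lemma inv_stepL n par u v : rooted_tree n par -> (v < u)%nat -> (u < n)%nat ->
  Inv n par (par u) v -> Inv n par u v.
Proof.
  intros RT Hvu Hu (c & L1 & L2 & c1 & c2 & U1 & U2 & S1 & S2 & D).
  destruct U1 as ([T1 E1] & Hl1 & C1).
  assert (Hpu : (par u < u)%nat) by (apply RT; lia).
  assert (Hc2 : forall x, In x L2 -> (x <= v)%nat).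
  { destruct U2 as ([T2 E2] & _ & C2). subst L2. intros x [->|Hx]; [lia|].
    pose proof (chain_Up_lt n par v T2 RT C2 x Hx). lia. }
  assert (UL : uplist n par (u :: L1) u c).
  { split; [exists L1; reflexivity|]. split.
    - subst L1. exact Hl1.
    - subst L1. constructor; [split; [lia|reflexivity]| exact C1]. }
  destruct S1 as [S1|(Hc1 & Hpc1 & Hin1 & Hall1)].
  -
    assert (par u = c) by (subst L1; inversion S1; reflexivity).
    exists c, (u :: L1), L2, u, c2. refine (conj UL (conj U2 (conj _ (conj S2 _)))).
    + right. split; [lia|]. split; auto. split; [left; reflexivity|].
      intros a [->|Ha]; [right; constructor|]. left. rewrite S1 in Ha. destruct Ha as [->|[]]; reflexivity.
    + right. destruct S2 as [S2|(_ & _ & Hin2 & _)]; [left; auto|right].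
      specialize (Hc2 c2 Hin2). lia.
  - assert (Hc1c : (par c1 < c1)%nat) by (apply RT; lia).
    assert (NL1 : L1 <> [c]).
    { intros ->. destruct Hin1 as [->|[]]. lia. }
    exists c, (u :: L1), L2, c1, c2. refine (conj UL (conj U2 (conj _ (conj S2 _)))).
    + right. split; auto. split; auto. split; [right; auto|].
      intros a [<-|Ha]; [|auto]. right.
      assert (Hp : In (par u) L1) by (subst L1; left; reflexivity).
      destruct (Hall1 _ Hp) as [Hpc|Hd].
      * exfalso. subst L1. destruct Hin1 as [Heq|Hin1]; [lia|].
        pose proof (chain_Up_lt n par (par u) T1 RT C1 c1 Hin1). lia.
      * eapply desc_step; [exact Hd| lia | reflexivity].
    + destruct D as [D|D]; [contradiction|]. right. exact D.
Qed.

Lemma inv_all n par : rooted_tree n par -> forall u v, (u<n)%nat -> (v<n)%nat -> Inv n par u v.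
Proof.
  intros RT.
  assert (H : forall k u v, (u + v < k)%nat -> (u<n)%nat -> (v<n)%nat -> Inv n par u v).
  { induction k; intros u v Hk Hu Hv; [lia|].
    destruct (Nat.lt_trichotomy u v) as [Huv|[Huv|Huv]].
    - apply inv_sym. apply inv_stepL; auto. apply inv_sym.
      assert (par v < v)%nat by (apply RT; lia). apply IHk; lia.
    - subst. apply inv_refl.
    - apply inv_stepL; auto.
      assert (par u < u)%nat by (apply RT; lia). apply IHk; lia. }
  intros u v Hu Hv. eapply H; eauto.
Qed.
Lemma slope_in_dec A B lo hi : slope_in A B lo hi ->
  exists th r, lo < th < hi /\ 0 < r /\ fst B - fst A = r * cos th /\ snd B - snd A = r * sin th.
Proof. intros (th & (_ & r & Hr & E1 & E2) & Hth). exists th, r. auto. Qed.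

Lemma angle_neg p1 p2 q1 q2 th : 0 <= p1 -> p2 <= q1 -> q2 <= PI -> q1 < q2 -> p1 < th < p2 ->
   cos (th - (q1 + p2 + PI)/2) < 0.
Proof.
  intros. pose proof PI_RGT_0.
  assert (0 < cos (th - (q1 + p2 + PI)/2 + PI)) by (apply cos_gt_0; lra).
  rewrite neg_cos in H5. lra.
Qed.

Lemma angle_pos p2 q1 q2 th : 0 <= p2 -> p2 <= q1 -> q2 <= PI -> q1 < th < q2 ->
  0 < cos (th - (q1 + p2 + PI)/2).
Proof. intros. pose proof PI_RGT_0. apply cos_gt_0; lra. Qed.

Lemma proj_diff m (A B : point) r th : fst B - fst A = r * cos th -> snd B - snd A = r * sin th ->
  proj (cos m, sin m) B - proj (cos m, sin m) A = r * cos (th - m).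
Proof.
  intros E1 E2. unfold proj; simpl. rewrite cos_minus.
  transitivity (cos m * (fst B - fst A) + sin m * (snd B - snd A)); [ring|].
  rewrite E1, E2; ring.
Qed.

Lemma proj_opp m (P : point) : proj (- cos m, - sin m) P = - proj (cos m, sin m) P.
Proof. unfold proj; simpl; ring. Qed.

Lemma cs_nz m : (cos m, sin m) <> (0, 0).
Proof.
  intros E. injection E as E1 E2. pose proof (sin2_cos2 m).
  rewrite E1, E2 in H. unfold Rsqr in H. lra.
Qed.

Lemma cs_nz' m : (- cos m, - sin m) <> (0, 0).
Proof.
  intros E. injection E as E1 E2. pose proof (sin2_cos2 m).
  assert (cos m = 0) by lra. assert (sin m = 0) by lra.
  rewrite H0, H1 in H. unfold Rsqr in H. lra.
Qed.

Lemma seg_lo d A B P : on_segment A B P -> proj d A < proj d B ->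
  proj d A <= proj d P /\ (proj d P = proj d A -> P = A).
Proof.
  intros (t & Ht & E1 & E2) Hl.
  assert (EP : proj d P = proj d A + t * (proj d B - proj d A)).
  { unfold proj. rewrite E1, E2. ring. }
  split; [nra|]. intros Heq.
  assert (t = 0) by nra. subst t.
  destruct P as [px py], A as [ax ay]; simpl in *. f_equal; lra.
Qed.

Lemma seg_hi d A B P : on_segment A B P -> proj d A < proj d B ->
  proj d P <= proj d B /\ (proj d P = proj d B -> P = B).
Proof.
  intros (t & Ht & E1 & E2) Hl.
  assert (EP : proj d P = proj d A + t * (proj d B - proj d A)).
  { unfold proj. rewrite E1, E2. ring. }
  split; [nra|]. intros Heq.
  assert (t = 1) by nra. subst t.
  destruct P as [px py], B as [bx by']; simpl in *. f_equal; lra.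
Qed.

Lemma seg_rev A B P : on_segment A B P -> on_segment B A P.
Proof.
  intros (t & Ht & E1 & E2). exists (1 - t). split; [lra|]. split.
  - rewrite E1; ring.
  - rewrite E2; ring.
Qed.
Definition NS (n : nat) (par : nat -> nat) (pos : nat -> point) (a1 a2 : nat -> R) : Prop :=
    (forall u, (u < n)%nat -> 0 <= a1 u < a2 u /\ a2 u <= PI) /\
    (forall u w, (u < n)%nat -> (w < n)%nat -> is_desc n par u w -> w <> u ->
        slope_in (pos (par w)) (pos w) (a1 u) (a2 u)) /\
    (forall u, (0 < u < n)%nat -> slope_in (pos (par u)) (pos u) (a1 u) (a2 u)) /\
    (forall v, (0 < v < n)%nat -> a1 (par v) <= a1 v /\ a1 v < a2 v /\ a2 v <= a2 (par v)) /\
    (forall v1 v2, (0 < v1 < n)%nat -> (0 < v2 < n)%nat -> v1 <> v2 -> par v1 = par v2 ->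
        (a1 v1 < a2 v1 <= a1 v2 /\ a1 v2 < a2 v2) \/
        (a1 v2 < a2 v2 <= a1 v1 /\ a1 v1 < a2 v1)).

Lemma edge_y n par pos a1 a2 : NS n par pos a1 a2 -> forall a, (0 < a < n)%nat ->
  snd (pos (par a)) < snd (pos a).
Proof.
  intros (Hr & _ & H1b & _) a Ha.
  destruct (slope_in_dec _ _ _ _ (H1b a Ha)) as (th & r & Hth & Hr0 & E1 & E2).
  destruct (Hr a ltac:(lia)).
  assert (0 < sin th) by (apply sin_gt_0; lra).
  assert (0 < r * sin th) by (apply Rmult_lt_0_compat; auto). lra.
Qed.

Lemma side_slope n par pos a1 a2 L x c c1 : rooted_tree n par -> NS n par pos a1 a2 ->
  uplist n par L x c -> side n par L c c1 -> L <> [c] ->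
  forall a b, In a L -> In b L -> Up n par a b ->
  slope_in (pos b) (pos a) (a1 c1) (a2 c1).
Proof.
  intros RT (Hr & H1 & H1b & _) ([T E] & Hl & C) S NL a b Ha Hb [Hab Hp].
  destruct S as [S|(Hc1 & Hpc1 & Hin1 & Hall)]; [contradiction|].
  assert (par a < a)%nat by (apply RT; lia).
  assert (Hcb : (c <= b)%nat).
  { subst L. rewrite <- Hl. apply (chain_Up_last_le n par); auto. }
  destruct (Hall a Ha) as [Hac|Hd]; [lia|].
  subst b. destruct (Nat.eq_dec a c1) as [->|Hne].
  - apply H1b; auto.
  - apply H1; auto; lia.
Qed.

Lemma dir_exists n par pos a1 a2 c L1 L2 c1 c2 u v : rooted_tree n par -> NS n par pos a1 a2 ->
  uplist n par L1 u c -> uplist n par L2 v c -> side n par L1 c c1 -> side n par L2 c c2 ->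
  (L1 = [c] \/ L2 = [c] \/ c1 <> c2) ->
  exists d : point, d <> (0, 0) /\
    chain (fun a b => proj d (pos a) < proj d (pos b)) L1 /\
    chain (fun a b => proj d (pos b) < proj d (pos a)) L2.
Proof.
  intros RT NSH U1 U2 S1 S2 D.
  pose proof (edge_y _ _ _ _ _ NSH) as EY.
  destruct (list_eq_dec Nat.eq_dec L1 [c]) as [E1|N1].
  - exists (0, 1). split; [intros E; injection E; lra|]. split.
    + rewrite E1. constructor.
    + destruct U2 as (_ & _ & C2). revert C2. apply chain_impl_in.
      intros a b _ _ [Ha <-]. unfold proj; simpl. specialize (EY a Ha). lra.
  - destruct (list_eq_dec Nat.eq_dec L2 [c]) as [E2|N2].
    + exists (0, -1). split; [intros E; injection E; lra|]. split.
      * destruct U1 as (_ & _ & C1). revert C1. apply chain_impl_in.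
        intros a b _ _ [Ha <-]. unfold proj; simpl. specialize (EY a Ha). lra.
      * rewrite E2. constructor.
    + destruct D as [D|[D|D]]; try contradiction.
      pose proof (side_slope _ _ _ _ _ _ _ _ _ RT NSH U1 S1 N1) as SL1.
      pose proof (side_slope _ _ _ _ _ _ _ _ _ RT NSH U2 S2 N2) as SL2.
      destruct S1 as [S1|(Hc1 & Hpc1 & _ & _)]; [contradiction|].
      destruct S2 as [S2|(Hc2 & Hpc2 & _ & _)]; [contradiction|].
      destruct NSH as (Hr & _ & _ & _ & H3).
      destruct (Hr c1 ltac:(lia)) as [R1 R1']. destruct (Hr c2 ltac:(lia)) as [R2 R2'].
      destruct (H3 c1 c2 Hc1 Hc2 D ltac:(congruence)) as [[O1 O2]|[O1 O2]].
      * set (m := (a1 c2 + a2 c1 + PI) / 2).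
        exists (cos m, sin m). split; [apply cs_nz|]. split.
        -- destruct U1 as (_ & _ & C1). revert C1. apply chain_impl_in.
           intros a b Ha Hb Hu. specialize (SL1 a b Ha Hb Hu).
           destruct (slope_in_dec _ _ _ _ SL1) as (th & r & Hth & Hr0 & E1 & E2).
           pose proof (proj_diff m _ _ _ _ E1 E2).
           assert (cos (th - m) < 0) by (apply (angle_neg (a1 c1) (a2 c1) (a1 c2) (a2 c2)); lra).
           assert (r * cos (th - m) < 0) by nra. lra.
        -- destruct U2 as (_ & _ & C2). revert C2. apply chain_impl_in.
           intros a b Ha Hb Hu. specialize (SL2 a b Ha Hb Hu).
           destruct (slope_in_dec _ _ _ _ SL2) as (th & r & Hth & Hr0 & E1 & E2).
           pose proof (proj_diff m _ _ _ _ E1 E2).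
           assert (0 < cos (th - m)) by (apply (angle_pos (a2 c1) (a1 c2) (a2 c2)); lra).
           assert (0 < r * cos (th - m)) by nra. lra.
      * set (m := (a1 c1 + a2 c2 + PI) / 2).
        exists (- cos m, - sin m). split; [apply cs_nz'|]. split.
        -- destruct U1 as (_ & _ & C1). revert C1. apply chain_impl_in.
           intros a b Ha Hb Hu. specialize (SL1 a b Ha Hb Hu).
           destruct (slope_in_dec _ _ _ _ SL1) as (th & r & Hth & Hr0 & E1 & E2).
           pose proof (proj_diff m _ _ _ _ E1 E2). rewrite !proj_opp.
           assert (0 < cos (th - m)) by (apply (angle_pos (a2 c2) (a1 c1) (a2 c1)); lra).
           assert (0 < r * cos (th - m)) by nra. lra.
        -- destruct U2 as (_ & _ & C2). revert C2. apply chain_impl_in.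
           intros a b Ha Hb Hu. specialize (SL2 a b Ha Hb Hu).
           destruct (slope_in_dec _ _ _ _ SL2) as (th & r & Hth & Hr0 & E1 & E2).
           pose proof (proj_diff m _ _ _ _ E1 E2). rewrite !proj_opp.
           assert (cos (th - m) < 0) by (apply (angle_neg (a1 c2) (a2 c2) (a1 c1) (a2 c1)); lra).
           assert (r * cos (th - m) < 0) by nra. lra.
Qed.
Lemma join_chain (R : nat -> nat -> Prop) L1 L2 c : L1 <> [] -> last L1 0%nat = c ->
  L2 <> [] -> last L2 0%nat = c ->
  chain R L1 -> chain (fun a b => R b a) L2 -> chain R (L1 ++ rev (removelast L2)).
Proof.
  intros N1 H1 N2 H2 C1 C2.
  pose proof (app_removelast_last 0%nat N1) as E1. rewrite H1 in E1.
  pose proof (app_removelast_last 0%nat N2) as E2. rewrite H2 in E2.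
  apply chain_rev in C2. rewrite E2 in C2. rewrite rev_unit in C2.
  rewrite E1. rewrite <- app_assoc. simpl. apply chain_app.
  - rewrite <- E1. exact C1.
  - exact C2.
Qed.

Lemma join_last L1 L2 v c : last L1 0%nat = c -> (exists T, L2 = v :: T) -> last L2 0%nat = c ->
  last (L1 ++ rev (removelast L2)) 0%nat = v.
Proof.
  intros H1 [T ->] H2. destruct T as [|t T].
  - simpl in *. rewrite app_nil_r. congruence.
  - change (removelast (v :: t :: T)) with (v :: removelast (t :: T)).
    simpl rev. rewrite app_assoc. apply last_last.
Qed.

Lemma monotone_part n par pos a1 a2 : rooted_tree n par -> NS n par pos a1 a2 ->
  monotone_drawing n par pos.
Proof.
  intros RT NSH u v Hu Hv.
  destruct (inv_all n par RT u v Hu Hv) as (c & L1 & L2 & c1 & c2 & U1 & U2 & S1 & S2 & D).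
  destruct (dir_exists _ _ _ _ _ _ _ _ _ _ _ _ RT NSH U1 U2 S1 S2 D) as (d & Hd & M1 & M2).
  destruct U1 as ([T1 E1] & Hl1 & C1). destruct U2 as ([T2 E2] & Hl2 & C2).
  assert (N1 : L1 <> []) by (subst; discriminate).
  assert (N2 : L2 <> []) by (subst; discriminate).
  exists (L1 ++ rev (removelast L2)). split.
  - split; [destruct L1; [congruence|discriminate]|]. split.
    + subst L1. reflexivity.
    + split.
      * apply (join_last L1 L2 v c); eauto.
      * intros i Hi. apply (chain_nth (adjacent n par)); auto. apply (join_chain _ L1 L2 c); auto.
        -- revert C1. apply chain_impl_in. intros a b _ _ [Ha Hp]. right. auto.
        -- revert C2. apply chain_impl_in. intros a b _ _ [Ha Hp]. left. auto.
  - exists d. split; auto. intros i Hi.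
    apply (chain_nth (fun a b => proj d (pos a) < proj d (pos b))); auto.
    apply (join_chain _ L1 L2 c); auto.
Qed.

Lemma anc_case n par pos a1 a2 v w L P : rooted_tree n par -> NS n par pos a1 a2 ->
  (0 < v < n)%nat -> (0 < w < n)%nat -> uplist n par L (par w) v ->
  on_segment (pos (par v)) (pos v) P -> on_segment (pos (par w)) (pos w) P ->
  exists x, (x = par v \/ x = v) /\ (x = par w \/ x = w) /\ P = pos x.
Proof.
  intros RT NSH Hv Hw ([T E] & Hl & C) Sv Sw.
  pose proof (edge_y _ _ _ _ _ NSH) as EY.
  set (d := (0, 1) : point).
  assert (Pd : forall Q : point, proj d Q = snd Q) by (intros; unfold proj, d; simpl; ring).
  assert (Hev : proj d (pos (par v)) < proj d (pos v)) by (rewrite !Pd; apply EY; auto).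
  assert (Hew : proj d (pos (par w)) < proj d (pos w)) by (rewrite !Pd; apply EY; auto).
  destruct (seg_hi d _ _ _ Sv Hev) as [Hv1 Hv2].
  destruct (seg_lo d _ _ _ Sw Hew) as [Hw1 Hw2].
  destruct T as [|t T].
  - subst L. simpl in Hl. exists v. split; [right; auto|]. split; [left; auto|].
    apply Hv2. rewrite <- Hl in *. lra.
  - exfalso.
    assert (Cy : chain (fun a b => proj d (pos b) < proj d (pos a)) L).
    { revert C. apply chain_impl_in. intros a b _ _ [Ha <-]. rewrite !Pd. apply EY; auto. }
    subst L. pose proof (chain_last (fun a b => proj d (pos b) < proj d (pos a)) _ _ ltac:(intros; lra) Cy ltac:(discriminate)) as Hlt.
    change (last (par w :: t :: T) 0%nat) with (last (t :: T) 0%nat) in Hl.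
    rewrite Hl in Hlt. simpl in Hlt. lra.
Qed.

Lemma planar_part n par pos a1 a2 : rooted_tree n par -> NS n par pos a1 a2 ->
  planar_drawing n par pos.
Proof.
  intros RT NSH v w Hv Hw Hvw P Sv Sw.
  destruct (inv_all n par RT v w ltac:(lia) ltac:(lia)) as (c & L1 & L2 & c1 & c2 & U1 & U2 & S1 & S2 & D).
  destruct (dir_exists _ _ _ _ _ _ _ _ _ _ _ _ RT NSH U1 U2 S1 S2 D) as (d & Hd & M1 & M2).
  destruct U1 as ([T1 E1] & Hl1 & C1). destruct U2 as ([T2 E2] & Hl2 & C2).
  destruct T1 as [|t1 T1].
  -
    subst L1. simpl in Hl1. subst c.
    destruct T2 as [|t2 T2]; [subst L2; simpl in Hl2; congruence|].
    subst L2. inversion C2 as [|x0|x y l Hxy Hc]. destruct Hxy as [_ Hp].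
    apply (anc_case n par pos a1 a2 v w (t2 :: T2) P); auto.
    split; [exists T2; rewrite Hp; reflexivity|]. split; auto.
  - destruct T2 as [|t2 T2].
    + subst L2. simpl in Hl2. subst c.
      subst L1. inversion C1 as [|x1|x y l Hxy Hc]. destruct Hxy as [_ Hp].
      destruct (anc_case n par pos a1 a2 w v (t1 :: T1) P) as (x0 & X1 & X2 & X3); auto.
      split; [exists T1; rewrite Hp; reflexivity|]. split; auto.
      exists x0. auto.
    + subst L1 L2.
      assert (Hp1 : par v = t1) by (inversion C1 as [|q7|q7 q8 q9 [_ Hp1] _]; exact Hp1).
      assert (Hp2 : par w = t2) by (inversion C2 as [|q7|q7 q8 q9 [_ Hp2] _]; exact Hp2).
      subst t1 t2.
      inversion M1 as [|q1|q1 q2 q3 H2 H3]. inversion M2 as [|q4|q4 q5 q6 G1 H4].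
      idtac.
      assert (Hv' : par v = c \/ proj d (pos (par v)) < proj d (pos c)).
      { destruct T1 as [|s T1]; [left; exact Hl1|right].
        rewrite <- Hl1. apply (chain_last (fun a b => proj d (pos a) < proj d (pos b)) _ _ ltac:(intros; lra) H3 ltac:(discriminate)). }
      assert (Hw' : par w = c \/ proj d (pos c) < proj d (pos (par w))).
      { destruct T2 as [|s T2]; [left; exact Hl2|right].
        rewrite <- Hl2. apply (chain_last (fun a b => proj d (pos b) < proj d (pos a)) _ _
             ltac:(intros; lra) H4 ltac:(discriminate)). }
      destruct (seg_lo d _ _ _ (seg_rev _ _ _ Sv) H2) as [Hv1 Hv2].
      destruct (seg_lo d _ _ _ Sw G1) as [Hw1 Hw2].
      destruct (seg_hi d _ _ _ (seg_rev _ _ _ Sv) H2) as [Hv3 Hv4].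
      destruct Hv' as [Hv'|Hv']; destruct Hw' as [Hw'|Hw'].
      * exists (par v). split; [left; auto|]. split; [left; congruence|].
        apply Hv4. rewrite Hv', <- Hw' in *. lra.
      * exfalso. rewrite Hv' in *. lra.
      * exfalso. rewrite Hw' in *. lra.
      * exfalso. lra.
Qed.

Theorem theorem3 (n : nat) (par : nat -> nat) (pos : nat -> point) :
  rooted_tree n par -> drawing n pos ->
  non_strictly_slope_disjoint n par pos ->
  monotone_drawing n par pos /\ planar_drawing n par pos.
Proof.
  intros RT _ (a1 & a2 & NSH).
  split; [eapply monotone_part|eapply planar_part]; eauto.
Qed.
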